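(* Let $\Omega$ be a set, $n\ge1$, and let $H_1,\ldots,H_n,G$ be subgroups of $\mathrm{Sym}(\Omega)$ such that $(H_1,\ldots,H_n)$ is confined by $G$. Let $P$ be a confining subset for $(H_1,\ldots,H_n,G)$, let $r=|P|$, and assume that $\{\Omega_\sigma\}_{\sigma\in P}$ is a displacement configuration for $P$ such that for every $\sigma\in P$ the group $\mathrm{Rist}_G(\Omega_\sigma)$ is non-trivial and $\mathrm{FC}_{\leqslant nr}(\mathrm{Rist}_G(\Omega_\sigma))=\{1\}$. Then for every $\sigma\in P$ and $k\le n$ such that $D_{\sigma,k}$ has index at most $nr$ in $R$, there exists $\rho\in M_\sigma$ such that $H_k$ contains a non-trivial subgroup $N\le\mathrm{Rist}_G(\Omega_\rho)$ that is normalized by $D_{\sigma,k}$. Moreover, if $\mathrm{Rist}_G(\Omega_\rho)$ is finitely generated for all $\rho\in M_\sigma$, then one can find a finitely generated subgroup $L$ of $H_k$ that contains $N$.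
   Context: $\mathrm{Sym}(\Omega)$ is the group of permutations of $\Omega$. The $n$-tuple $(H_1,\ldots,H_n)$ is confined by $G$ if there is a finite set $P$ of non-trivial elements of $\mathrm{Sym}(\Omega)$ such that for every $g\in G$ there is $j$ with $gH_jg^{-1}\cap P\ne\varnothing$; $P$ is then a confining subset for $(H_1,\ldots,H_n,G)$. For $\Sigma\subset\Omega$, $\mathrm{Rist}_G(\Sigma)$ is the set of elements of $G$ fixing $\Omega\setminus\Sigma$ pointwise. $\mathrm{FC}_{\leqslant m}(K)$ denotes the set of elements of $K$ whose conjugacy class has at most $m$ elements. A collection $\{\Omega_\sigma\}_{\sigma\in P}$ of non-empty subsets of $\Omega$ is a displacement configuration for $P$ if: (C1) for all $\sigma,\rho\in P$, $\Omega_\sigma=\Omega_\rho$ or $\Omega_\sigma\cap\Omega_\rho=\varnothing$; (C3) for all $\sigma,\rho\in P$, either $\sigma$ fixes $\Omega_\rho$ pointwise or $\sigma(\Omega_\rho)\cap\bigcup_{\alpha\in P}\Omega_\alpha=\varnothing$; (C4) for all $\sigma\in P$, $\sigma(\Omega_\sigma)$ is disjoint from $\bigcup_{\alpha\in P}\Omega_\alpha$ and from $\bigcup_{\alpha\in P}\sigma^{-1}(\Omega_\alpha)$. Notation: $R$ is the subgroup of $G$ generated by the groups $\mathrm{Rist}_G(\Omega_\sigma)$, $\sigma\in P$. For $\sigma\in P$ and $k\le n$, $Y_{\sigma,k}=\{\gamma\in R:\gamma\sigma\gamma^{-1}\in H_k\}$ and $D_{\sigma,k}=\langle\gamma\delta^{-1}:\gamma,\delta\in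 Y_{\sigma,k}\rangle$. For $\sigma\in P$, $M_\sigma$ is the set of $\rho\in P$ such that $\sigma(\Omega_\rho)$ is disjoint from $\Omega_\alpha$ for all $\alpha\in P$. *)

(* Defs.v *)
(* Permutations of a set Omega (a Type) are represented as
   functions Omega -> Omega; subgroups of Sym(Omega) as predicates on such
   functions whose members are bijections (see [is_subgroup]).
   Equality of permutations is pointwise. *)
From Stdlib Require Import List Arith.
Import ListNotations.
Set Implicit Arguments.
Unset Strict Implicit.

Section Defs.
Variable Omega : Type.
Definition perm_t := Omega -> Omega.
Definition pset := perm_t -> Prop.

Definition is_id (f : perm_t) : Prop := forall x, f x = x.

Definition inverse_of (f g : perm_t) : Prop :=
  (forall x, g (f x) = x) /\ (forall x, f (g x) = x).

Definition bijective_perm (f : perm_t) : Prop := exists g, inverse_of f g.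

Definition nontrivial_perm (f : perm_t) : Prop := bijective_perm f /\ ~ is_id f.

Definition is_subgroup (K : pset) : Prop :=
  (forall f, K f -> bijective_perm f) /\
  K (fun x => x) /\
  (forall f g, K f -> K g -> K (fun x => f (g x))) /\
  (forall f g, K f -> inverse_of f g -> K g).

Definition subset (A B : pset) : Prop := forall f, A f -> B f.

Definition gen (S : pset) : pset :=
  fun f => forall K, is_subgroup K -> subset S K -> K f.

Definition nontrivial_group (K : pset) : Prop := exists f, K f /\ ~ is_id f.

(* x is conjugated by g to y, i.e. g x g^{-1} = y  (pointwise: g o x = y o g) *)
Definition conj_to (g x y : perm_t) : Prop := forall z, g (x z) = y (g z).

Definition confining_subset (n : nat) (H : nat -> pset) (G : pset)
  (P : list perm_t) : Prop :=
  (forall p, In p P -> nontrivial_perm p) /\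
  forall g, G g -> exists j, 1 <= j <= n /\
    exists h, H j h /\ exists p, In p P /\ conj_to g h p.

Definition confined (n : nat) (H : nat -> pset) (G : pset) : Prop :=
  exists P : list perm_t, confining_subset n H G P.

Definition Rist (G : pset) (Sigma : Omega -> Prop) : pset :=
  fun g => G g /\ forall x, ~ Sigma x -> g x = x.

Definition union_conf (P : list perm_t) (Om : perm_t -> Omega -> Prop)
  : Omega -> Prop := fun x => exists a, In a P /\ Om a x.

(* displacement configuration, conditions (C1), (C3), (C4), sets non-empty *)
Definition displacement_configuration (P : list perm_t)
  (Om : perm_t -> Omega -> Prop) : Prop :=
  (forall s, In s P -> exists x, Om s x) /\
  (forall s r, In s P -> In r P ->
     (forall x, Om s x <-> Om r x) \/ (forall x, ~ (Om s x /\ Om r x))) /\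
  (forall s r, In s P -> In r P ->
     (forall x, Om r x -> s x = x) \/
     (forall x, Om r x -> ~ union_conf P Om (s x))) /\
  (forall s, In s P ->
     (forall x, Om s x -> ~ union_conf P Om (s x)) /\
     (forall x, Om s x -> forall a, In a P -> ~ Om a (s (s x)))).

(* FC_{<= m}(K) = {1}: every element of K whose K-conjugacy class has at most
   m elements is the identity *)
Definition conj_class_le (K : pset) (m : nat) (x : perm_t) : Prop :=
  exists s : list perm_t, length s <= m /\
    forall k, K k -> exists y, In y s /\ conj_to k x y.

Definition FC_trivial (K : pset) (m : nat) : Prop :=
  forall x, K x -> conj_class_le K m x -> is_id x.

Definition R_gen (G : pset) (P : list perm_t) (Om : perm_t -> Omega -> Prop)
  : pset := gen (fun f => exists s, In s P /\ Rist G (Om s) f).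

Definition Yset (G : pset) (P : list perm_t) (Om : perm_t -> Omega -> Prop)
  (H : nat -> pset) (s : perm_t) (k : nat) : pset :=
  fun c => R_gen G P Om c /\ exists h, H k h /\ conj_to c s h.

(* D_{sigma,k} = < c d^{-1} : c, d in Y_{sigma,k} > *)
Definition Dset (G : pset) (P : list perm_t) (Om : perm_t -> Omega -> Prop)
  (H : nat -> pset) (s : perm_t) (k : nat) : pset :=
  gen (fun f => exists c d, Yset G P Om H s k c /\ Yset G P Om H s k d /\
                  forall z, f (d z) = c z).

Definition index_le (D K : pset) (m : nat) : Prop :=
  exists s : list perm_t, length s <= m /\ (forall g, In g s -> K g) /\
    forall x, K x -> exists g, In g s /\ exists d, D d /\ forall z, x z = g (d z).

Definition Mset (P : list perm_t) (Om : perm_t -> Omega -> Prop) (s : perm_t)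
  : perm_t -> Prop :=
  fun r => In r P /\ forall a, In a P -> forall x, Om r x -> ~ Om a (s x).

Definition normalized_by (N D : pset) : Prop :=
  forall d x, D d -> N x -> exists y, N y /\ conj_to d x y.

Definition fin_gen (K : pset) : Prop :=
  exists s : list perm_t, forall f, K f <-> gen (fun g => In g s) f.

End Defs.

(* Main.v *)
Require Import Defs.
From Stdlib Require Import List Arith Lia Classical ClassicalEpsilon FunctionalExtensionality.
Import ListNotations.
Section Perm.
Variable Omega : Type.
Notation perm := (perm_t Omega).
Notation ps := (pset Omega).
Implicit Types f g : perm.
Implicit Types V W : Omega -> Prop.
Implicit Types K S A B : ps.

Definition inv (f : perm) : perm :=
  epsilon (inhabits (fun x : Omega => x)) (fun g => inverse_of f g).

Lemma inv_spec f : bijective_perm f -> inverse_of f (inv f).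
Proof. intros [g Hg]. unfold inv. apply (epsilon_spec (inhabits (fun x : Omega => x)) (fun g => inverse_of f g)). eauto. Qed.

Lemma invK f : bijective_perm f -> forall x, inv f (f x) = x.
Proof. intros Hf. apply (proj1 (inv_spec f Hf)). Qed.
Lemma Kinv f : bijective_perm f -> forall x, f (inv f x) = x.
Proof. intros Hf. apply (proj2 (inv_spec f Hf)). Qed.

Lemma bij_inj f : bijective_perm f -> forall x y, f x = f y -> x = y.
Proof. intros Hf x y E. rewrite <- (invK f Hf x), <- (invK f Hf y), E. reflexivity. Qed.

Lemma inv_unique f g : bijective_perm f -> inverse_of f g -> g = inv f.
Proof.
  intros Hf [H1 H2]. apply functional_extensionality. intro x.
  rewrite <- (Kinv f Hf x) at 1. rewrite H1. reflexivity.
Qed.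

Lemma bij_of_inv f g : inverse_of f g -> bijective_perm f.
Proof. intros H. exists g. exact H. Qed.

Lemma bij_inv f : bijective_perm f -> bijective_perm (inv f).
Proof. intros Hf. exists f. split; intro x. apply Kinv; auto. apply invK; auto. Qed.

Lemma inv_inv f : bijective_perm f -> inv (inv f) = f.
Proof.
  intros Hf. symmetry. apply inv_unique. apply bij_inv; auto.
  split; intro x. apply Kinv; auto. apply invK; auto.
Qed.

Lemma bij_id : bijective_perm (fun x : Omega => x).
Proof. exists (fun x => x). split; reflexivity. Qed.

Lemma inv_id : inv (fun x : Omega => x) = (fun x => x).
Proof. symmetry. apply inv_unique. apply bij_id. split; reflexivity. Qed.

Lemma bij_comp f g : bijective_perm f -> bijective_perm g -> bijective_perm (fun x => f (g x)).
Proof.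
  intros Hf Hg. exists (fun x => inv g (inv f x)). split; intro x.
  rewrite invK by auto. apply invK; auto.
  rewrite Kinv by auto. apply Kinv; auto.
Qed.

Lemma inv_comp f g : bijective_perm f -> bijective_perm g ->
  inv (fun x => f (g x)) = (fun x => inv g (inv f x)).
Proof.
  intros Hf Hg. symmetry. apply inv_unique. apply bij_comp; auto.
  split; intro x. rewrite invK by auto. apply invK; auto.
  rewrite Kinv by auto. apply Kinv; auto.
Qed.

Lemma sg_bij K f : is_subgroup K -> K f -> bijective_perm f.
Proof. intros [H _] Hf. auto. Qed.
Lemma sg_id K : is_subgroup K -> K (fun x => x).
Proof. intros [_ [H _]]. auto. Qed.
Lemma sg_comp K f g : is_subgroup K -> K f -> K g -> K (fun x => f (g x)).
Proof. intros [_ [_ [H _]]]. auto. Qed.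
Lemma sg_inv K f : is_subgroup K -> K f -> K (inv f).
Proof. intros HK Hf. destruct HK as [Hb [_ [_ Hi]]]. apply (Hi f). auto. apply inv_spec; auto. Qed.

Lemma sg_eq K f g : K f -> f = g -> K g.
Proof. intros H E; subst; auto. Qed.

Lemma gen_incl (S : ps) f : S f -> gen S f.
Proof. intros Hf K HK HS. apply HS; auto. Qed.

Lemma gen_ind (S K : ps) : is_subgroup K -> subset S K -> subset (gen S) K.
Proof. intros HK HS f Hf. apply Hf; auto. Qed.

Lemma gen_sub (S : ps) : (forall f, S f -> bijective_perm f) -> is_subgroup (gen S).
Proof.
  intros HS. split; [|split; [|split]].
  - intros f Hf. set (B := fun f : perm => bijective_perm f).
    apply (Hf B). 2: { intros g Hg. apply HS; auto. }
    split; [|split; [|split]]; unfold B.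
    + auto.
    + apply bij_id.
    + intros; apply bij_comp; auto.
    + intros f0 g0 _ H. exists f0. destruct H; split; auto.
  - intros K HK _. apply sg_id; auto.
  - intros f g Hf Hg K HK HSK. apply sg_comp; auto; [apply Hf|apply Hg]; auto.
  - intros f g Hf Hfg K HK HSK. destruct HK as [Hb [Hid [Hc Hi]]].
    apply (Hi f g). apply Hf; auto. split; auto. auto.
Qed.

Lemma gen_ext (S S' : ps) : (forall f, S f <-> S' f) -> forall f, gen S f <-> gen S' f.
Proof.
  intros E f. split; intros Hf K HK HS; apply Hf; auto; intros g Hg; apply HS; apply E; auto.
Qed.

Lemma sg_inter (A B : ps) : is_subgroup A -> is_subgroup B -> is_subgroup (fun f => A f /\ B f).
Proof.
  intros HA HB. split; [|split; [|split]].
  - intros f [Hf _]. exact (sg_bij A f HA Hf).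
  - split; apply sg_id; auto.
  - intros f g [] []. split; apply sg_comp; auto.
  - intros f g [Ha Hb] Hi. destruct HA as [_ [_ [_ HA]]]. destruct HB as [_ [_ [_ HB]]]. split; eauto.
Qed.

Lemma mk_sg (K : ps) : (forall f, K f -> bijective_perm f) -> K (fun x => x) ->
  (forall f g, K f -> K g -> K (fun x => f (g x))) -> (forall f, K f -> K (inv f)) -> is_subgroup K.
Proof.
  intros H1 H2 H3 H4. split; [|split; [|split]]; auto.
  intros f g Hf Hi. replace g with (inv f). auto. symmetry. apply inv_unique; auto.
Qed.

Definition supp_in (f : perm) (V : Omega -> Prop) := forall x, ~ V x -> f x = x.
Definition preserves (f : perm) (V : Omega -> Prop) := forall x, V (f x) <-> V x.

Lemma supp_preserves f V : bijective_perm f -> supp_in f V -> preserves f V.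
Proof.
  intros Hf Hs x. split; intro H.
  - destruct (classic (V x)) as [|Hn]; auto. rewrite Hs in H; auto.
  - destruct (classic (V (f x))) as [|Hn]; auto. exfalso.
    assert (f (f x) = f x) by (apply Hs; auto).
    apply bij_inj in H0; auto. rewrite H0 in Hn. auto.
Qed.

Lemma supp_inv f V : bijective_perm f -> supp_in f V -> supp_in (inv f) V.
Proof.
  intros Hf Hs x Hx. rewrite <- (Hs x Hx) at 1. apply invK; auto.
Qed.

Lemma supp_comp f g V : supp_in f V -> supp_in g V -> supp_in (fun x => f (g x)) V.
Proof. intros Hf Hg x Hx. rewrite Hg, Hf; auto. Qed.

Lemma supp_mono f V W : supp_in f V -> (forall x, V x -> W x) -> supp_in f W.
Proof. intros Hf HVW x Hx. apply Hf. intro; apply Hx; auto. Qed.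

Lemma preserves_inv f V : bijective_perm f -> preserves f V -> preserves (inv f) V.
Proof. intros Hf Hp x. pose proof (Hp (inv f x)) as E. rewrite Kinv in E; auto. tauto. Qed.

Lemma preserves_comp f g V : preserves f V -> preserves g V -> preserves (fun x => f (g x)) V.
Proof. intros Hf Hg x. pose proof (Hf (g x)). pose proof (Hg x). tauto. Qed.

Lemma commute_disj f g V W : bijective_perm f -> bijective_perm g -> supp_in f V -> supp_in g W ->
  (forall x, V x -> W x -> False) -> forall x, f (g x) = g (f x).
Proof.
  intros Hf Hg Hsf Hsg Hd x.
  pose proof (supp_preserves f V Hf Hsf) as Pf.
  pose proof (supp_preserves g W Hg Hsg) as Pg.
  destruct (classic (V x)) as [Hv|Hv].
  - assert (~ W x) by eauto. rewrite (Hsg x) by auto.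
    assert (V (f x)) by (apply Pf; auto). rewrite (Hsg (f x)); auto. intro; eauto.
  - rewrite (Hsf x) by auto. destruct (classic (W x)) as [Hw|Hw].
    + assert (W (g x)) by (apply Pg; auto). rewrite Hsf; auto. intro; eauto.
    + rewrite (Hsg x) by auto. rewrite Hsf; auto.
Qed.

Lemma comm_inv f g : bijective_perm g -> (forall x, f (g x) = g (f x)) -> forall x, f (inv g x) = inv g (f x).
Proof.
  intros Hg C x. apply (bij_inj g Hg). rewrite <- C. rewrite !Kinv; auto.
Qed.

Definition restr (V : Omega -> Prop) (f : perm) : perm :=
  fun x => if excluded_middle_informative (V x) then f x else x.

Lemma restr_in V f x : V x -> restr V f x = f x.
Proof. intros H. unfold restr. destruct excluded_middle_informative; tauto. Qed.
Lemma restr_out V f x : ~ V x -> restr V f x = x.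
Proof. intros H. unfold restr. destruct excluded_middle_informative; tauto. Qed.

Lemma restr_supp V f : supp_in (restr V f) V.
Proof. intros x Hx. apply restr_out; auto. Qed.

Lemma restr_id V : restr V (fun x => x) = (fun x => x).
Proof. apply functional_extensionality; intro x. unfold restr. destruct excluded_middle_informative; auto. Qed.

Lemma restr_comp V f g : preserves g V -> restr V (fun x => f (g x)) = (fun x => restr V f (restr V g x)).
Proof.
  intros Hg. apply functional_extensionality; intro x. destruct (classic (V x)) as [Hv|Hv].
  - assert (V (g x)) by (apply Hg; auto). rewrite (restr_in V g x Hv). rewrite !restr_in; auto.
  - assert (~ V (g x)) by (intro; apply Hv; apply Hg; auto). rewrite (restr_out V g x Hv). rewrite !restr_out; auto.
Qed.

Lemma restr_bij V f : bijective_perm f -> preserves f V -> bijective_perm (restr V f).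
Proof.
  intros Hf Hp. exists (restr V (inv f)). pose proof (preserves_inv f V Hf Hp) as Hq.
  split; intro x; destruct (classic (V x)) as [Hv|Hv].
  - rewrite (restr_in V _ x Hv). rewrite restr_in. apply invK; auto. apply Hp; auto.
  - rewrite (restr_out V _ x Hv). rewrite restr_out; auto.
  - rewrite (restr_in V _ x Hv). rewrite restr_in. apply Kinv; auto. apply Hq; auto.
  - rewrite (restr_out V _ x Hv). rewrite restr_out; auto.
Qed.

Lemma restr_inv V f : bijective_perm f -> preserves f V -> inv (restr V f) = restr V (inv f).
Proof.
  intros Hf Hp. symmetry. apply inv_unique. apply restr_bij; auto.
  pose proof (preserves_inv f V Hf Hp) as Hq.
  split; intro x; destruct (classic (V x)) as [Hv|Hv].
  - rewrite (restr_in V _ x Hv). rewrite restr_in. apply invK; auto. apply Hp; auto.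
  - rewrite (restr_out V _ x Hv). rewrite restr_out; auto.
  - rewrite (restr_in V _ x Hv). rewrite restr_in. apply Kinv; auto. apply Hq; auto.
  - rewrite (restr_out V _ x Hv). rewrite restr_out; auto.
Qed.

Lemma restr_self V f : supp_in f V -> restr V f = f.
Proof.
  intros H. apply functional_extensionality; intro x. destruct (classic (V x)).
  rewrite restr_in; auto. rewrite restr_out, H; auto.
Qed.


Lemma cover_step A S a0 h b0 a b : is_subgroup A -> is_subgroup S -> A a0 -> A a -> S b0 -> S b ->
  a0 = (fun x => h (b0 x)) -> a = (fun x => h (b x)) ->
  S (fun x => inv a0 (a x)) /\ A (fun x => inv a0 (a x)) /\ a = (fun x => a0 (inv a0 (a x))).
Proof.
  intros HA HS Ha0 Ha Hb0 Hb E0 E.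
  assert (Ba0 : bijective_perm a0) by exact (sg_bij A a0 HA Ha0).
  assert (Bb0 : bijective_perm b0) by exact (sg_bij S b0 HS Hb0).
  split; [|split].
  - apply (sg_eq S (fun x => inv b0 (b x))). apply sg_comp; auto. apply sg_inv; auto.
    apply functional_extensionality; intro x.
    transitivity (inv a0 (a0 (inv b0 (b x)))). rewrite (invK a0 Ba0). reflexivity.
    f_equal. rewrite E0, E. rewrite (Kinv b0 Bb0). reflexivity.
  - apply sg_comp; auto. apply sg_inv; auto.
  - apply functional_extensionality; intro x. rewrite Kinv; auto.
Qed.

Lemma cover_restrict A S (hs : list perm) :
  is_subgroup A -> is_subgroup S ->
  (forall a, A a -> exists h, In h hs /\ exists b, S b /\ a = (fun x => h (b x))) ->
  exists ts, length ts <= length hs /\ (forall t, In t ts -> A t) /\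
   forall a, A a -> exists t, In t ts /\ exists b, S b /\ A b /\ a = (fun x => t (b x)).
Proof.
  intros HA HS Hcov.
  assert (forall hs, exists ts, length ts <= length hs /\ (forall t, In t ts -> A t) /\
   forall a, A a -> (exists h, In h hs /\ exists b, S b /\ a = (fun x => h (b x))) ->
     exists t, In t ts /\ exists b, S b /\ A b /\ a = (fun x => t (b x))) as Gen.
  { clear Hcov hs. induction hs as [|h hs IH].
    - exists []. simpl. split; [lia|split]. intros t []. intros a _ [h [[] _]].
    - destruct IH as [ts [L [Hts Hc]]].
      destruct (classic (exists a0, A a0 /\ exists b0, S b0 /\ a0 = (fun x => h (b0 x)))) as [[a0 [Ha0 [b0 [Hb0 E0]]]]|Hno].
      + exists (a0 :: ts). simpl. split; [lia|split].
        * intros t [<-|]; auto.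
        * intros a Ha [h' [[Eh|Hin] [b [Hb E]]]].
          -- subst h'. exists a0. split; auto. exists (fun x => inv a0 (a x)).
             destruct (cover_step A S a0 h b0 a b) as [X1 [X2 X3]]; auto.
          -- destruct (Hc a Ha) as [t [Ht R]]. eauto. exists t; auto.
      + exists ts. simpl. split; [lia|split; auto].
        intros a Ha [h' [[Eh|Hin] [b [Hb E]]]].
        * subst h'. exfalso. apply Hno. eauto.
        * apply Hc; eauto. }
  destruct (Gen hs) as [ts [L [Hts Hc]]]. exists ts. repeat split; auto.
Qed.

Lemma fc_centralizer A B (m : nat) (ts : list perm) :
  is_subgroup A -> length ts <= m -> (forall t, In t ts -> A t) ->
  (forall a, A a -> exists t, In t ts /\ exists b, B b /\ a = (fun x => t (b x))) ->
  FC_trivial A m -> forall y, A y -> (forall b, B b -> forall z, y (b z) = b (y z)) -> is_id y.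
Proof.
  intros HA Hl Hts Hc HFC y Hy Hcomm. apply HFC; auto.
  exists (map (fun t => fun x => t (y (inv t x))) ts). split.
  - rewrite length_map; auto.
  - intros a Ha. destruct (Hc a Ha) as [t [Ht [b [Hb E]]]].
    exists (fun x => t (y (inv t x))). split.
    + apply in_map_iff. eauto.
    + intro z. subst a. rewrite invK. rewrite Hcomm; auto. exact (sg_bij A t HA (Hts t Ht)).
Qed.

Lemma list_collect {X Y : Type} (l : list X) (Pr : X -> Y -> Prop) (C : Y -> Prop) :
  (forall x, In x l -> exists y, C y /\ Pr x y) ->
  exists F, (forall y, In y F -> C y) /\ forall x, In x l -> exists y, In y F /\ Pr x y.
Proof.
  induction l as [|x l IH]; intros H.
  - exists []. simpl. split; tauto.
  - destruct IH as [F [H1 H2]]. intros; apply H; simpl; auto.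
    destruct (H x) as [y [Cy Py]]. simpl; auto.
    exists (y :: F). simpl. split.
    + intros y' [<-|]; auto.
    + intros x' [<-|Hin]. eauto. destruct (H2 x' Hin) as [y' []]; eauto.
Qed.

Lemma list_filter_prop {X : Type} (l : list X) (Q : X -> Prop) :
  exists l', (forall x, In x l' -> In x l /\ Q x) /\ (forall x, In x l -> Q x -> In x l').
Proof.
  induction l as [|x l IH].
  - exists []. simpl. tauto.
  - destruct IH as [l' [H1 H2]]. destruct (classic (Q x)).
    + exists (x :: l'). simpl. split.
      * intros y [<-|Hy]; auto. destruct (H1 y Hy); auto.
      * intros y [<-|Hy] Qy; auto.
    + exists l'. simpl. split.
      * intros y Hy. destruct (H1 y Hy); auto.
      * intros y [<-|Hy] Qy; auto. contradiction.
Qed.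

Lemma schreier A K (gs ts : list perm) :
  is_subgroup A -> is_subgroup K -> subset K A ->
  (forall f, A f <-> gen (fun g => In g gs) f) ->
  (forall t, In t ts -> A t) ->
  (forall a, A a -> exists t, In t ts /\ exists b, K b /\ a = (fun x => t (b x))) ->
  exists ks, (forall k, In k ks -> K k) /\ forall k, K k -> gen (fun g => In g ks) k.
Proof.
  intros HA HK HKA HAg Hts Hcov.
  assert (Hgs : forall g, In g gs -> A g) by (intros g Hg; apply HAg, gen_incl; auto).
  set (gs2 := gs ++ map inv gs).
  assert (Hgs2 : forall g, In g gs2 -> A g).
  { intros g Hg. apply in_app_or in Hg. destruct Hg as [Hg|Hg]; auto.
    apply in_map_iff in Hg. destruct Hg as [g0 [<- Hg0]]. apply sg_inv; auto. }
  destruct (list_collect (list_prod gs2 ts)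
     (fun p k => exists t', In t' ts /\ (fun x => fst p (snd p x)) = (fun x => t' (k x))) K) as [F [HF1 HF2]].
  { intros [a t] Hin. apply in_prod_iff in Hin. destruct Hin as [Ha Ht].
    destruct (Hcov (fun x => a (t x))) as [t' [Ht' [b [Hb E]]]].
    apply sg_comp; auto. exists b. split; auto. exists t'. split; auto. }
  destruct (list_filter_prop ts K) as [TK [HT1 HT2]].
  set (ks := F ++ TK).
  assert (HksK : forall k, In k ks -> K k).
  { intros k Hk. apply in_app_or in Hk. destruct Hk as [Hk|Hk]; auto. apply HT1; auto. }
  set (Gk := gen (fun g => In g ks)).
  assert (GkK : subset Gk K) by (apply gen_ind; auto).
  assert (HGk : is_subgroup Gk).
  { apply gen_sub. intros f Hf. apply (sg_bij K); auto. }
  set (W := fun a : perm => forall t, In t ts -> exists t', In t' ts /\ exists f, Gk f /\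
              (fun x => a (t x)) = (fun x => t' (f x))).
  assert (Wcomp : forall a b, W a -> W b -> W (fun x => a (b x))).
  { intros a b Wa Wb t Ht. destruct (Wb t Ht) as [t1 [Ht1 [f1 [Hf1 E1]]]].
    destruct (Wa t1 Ht1) as [t2 [Ht2 [f2 [Hf2 E2]]]].
    exists t2. split; auto. exists (fun x => f2 (f1 x)). split. apply sg_comp; auto.
    apply functional_extensionality; intro x.
    pose proof (equal_f E1 x) as E1x. pose proof (equal_f E2 (f1 x)) as E2x. simpl in *.
    rewrite E1x. exact E2x. }
  set (W' := fun a => A a /\ W a /\ W (inv a)).
  assert (HW' : is_subgroup W').
  { apply mk_sg.
    - intros f [Hf _]. apply (sg_bij A); auto.
    - assert (W (fun x => x)).
      { intros t Ht. exists t. split; auto. exists (fun x => x). split. apply sg_id; auto. reflexivity. }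
      split. apply sg_id; auto. split; auto. rewrite inv_id. auto.
    - intros f g [Af [Wf Wf']] [Ag [Wg Wg']]. split. apply sg_comp; auto. split. apply Wcomp; auto.
      rewrite inv_comp. apply Wcomp; auto. apply (sg_bij A); auto. apply (sg_bij A); auto.
    - intros f [Af [Wf Wf']]. split. apply sg_inv; auto. split; auto. rewrite inv_inv; auto. apply (sg_bij A); auto. }
  assert (Wgen : forall g, In g gs2 -> W g).
  { intros g Hg t Ht. destruct (HF2 (g, t)) as [k [Hk [t' [Ht' E]]]].
    apply in_prod; auto. exists t'. split; auto. exists k. split; auto. apply gen_incl.
    unfold ks. apply in_or_app. auto. }
  assert (AW : forall a, A a -> W a).
  { intros a Ha. apply HAg in Ha. apply (gen_ind (fun g => In g gs) W' HW') in Ha. apply Ha.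
    intros g Hg. split; auto. split; apply Wgen; unfold gs2; apply in_or_app; auto.
    right. apply in_map; auto. }
  exists ks. split; auto. intros k Hk.
  destruct (Hcov (fun x => x)) as [t0 [Ht0 [b0 [Hb0 E0]]]]. apply sg_id; auto.
  assert (Bb0 : bijective_perm b0) by (apply (sg_bij K); auto).
  assert (Et0 : t0 = inv b0).
  { apply functional_extensionality; intro y. rewrite <- (Kinv b0 Bb0 y) at 1.
    pose proof (equal_f E0 (inv b0 y)) as X. simpl in X. auto. }
  assert (Kt0 : K t0) by (rewrite Et0; apply sg_inv; auto).
  assert (Bt0 : bijective_perm t0) by (apply (sg_bij K); auto).
  destruct (AW k (HKA k Hk) t0 Ht0) as [t' [Ht' [f [Hf E]]]].
  assert (Bf : bijective_perm f) by (apply (sg_bij Gk); auto).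
  assert (Kt' : K t').
  { replace t' with (fun y => k (t0 (inv f y))). apply sg_comp; auto. apply sg_comp; auto. apply sg_inv; auto.
    apply functional_extensionality; intro y. rewrite <- (Kinv f Bf y) at 2.
    pose proof (equal_f E (inv f y)) as X. simpl in X. auto. }
  replace k with (fun y => t' (f (inv t0 y))).
  - apply sg_comp; auto. apply gen_incl. unfold ks. apply in_or_app. right. apply HT2; auto.
    apply sg_comp; auto. apply sg_inv; auto. apply gen_incl. unfold ks. apply in_or_app. right. apply HT2; auto.
  - apply functional_extensionality; intro y. pose proof (equal_f E (inv t0 y)) as X. simpl in X.
    rewrite <- X. rewrite Kinv; auto.
Qed.

End Perm.
Arguments inv {Omega}.
Arguments inv_spec {Omega}.
Arguments invK {Omega}.
Arguments Kinv {Omega}.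
Arguments bij_inj {Omega}.
Arguments inv_unique {Omega}.
Arguments bij_of_inv {Omega}.
Arguments bij_inv {Omega}.
Arguments inv_inv {Omega}.
Arguments bij_id {Omega}.
Arguments inv_id {Omega}.
Arguments bij_comp {Omega}.
Arguments inv_comp {Omega}.
Arguments sg_bij {Omega}.
Arguments sg_id {Omega}.
Arguments sg_comp {Omega}.
Arguments sg_inv {Omega}.
Arguments sg_eq {Omega}.
Arguments gen_incl {Omega}.
Arguments gen_ind {Omega}.
Arguments gen_sub {Omega}.
Arguments gen_ext {Omega}.
Arguments sg_inter {Omega}.
Arguments mk_sg {Omega}.
Arguments supp_in {Omega}.
Arguments preserves {Omega}.
Arguments supp_preserves {Omega}.
Arguments supp_inv {Omega}.
Arguments supp_comp {Omega}.
Arguments supp_mono {Omega}.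
Arguments preserves_inv {Omega}.
Arguments preserves_comp {Omega}.
Arguments commute_disj {Omega}.
Arguments comm_inv {Omega}.
Arguments restr {Omega}.
Arguments restr_in {Omega}.
Arguments restr_out {Omega}.
Arguments restr_supp {Omega}.
Arguments restr_id {Omega}.
Arguments restr_comp {Omega}.
Arguments restr_bij {Omega}.
Arguments restr_inv {Omega}.
Arguments restr_self {Omega}.
Arguments cover_step {Omega}.
Arguments cover_restrict {Omega}.
Arguments fc_centralizer {Omega}.
Arguments schreier {Omega}.

Section Setup.
Variable Omega : Type.
Notation perm := (perm_t Omega).
Notation ps := (pset Omega).
Implicit Types f g x y : perm.
Implicit Types V W : Omega -> Prop.
Variables (H : nat -> ps) (G : ps) (P : list perm) (Om : perm -> Omega -> Prop) (s : perm) (k m : nat).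
Hypothesis hG : is_subgroup G.
Hypothesis hHk : is_subgroup (H k).
Hypothesis hsb : bijective_perm s.
Hypothesis hDC : displacement_configuration P Om.
Hypothesis hs : In s P.
Hypothesis hNT : forall r, In r P -> nontrivial_group (Rist G (Om r)).
Hypothesis hFC : forall r, In r P -> FC_trivial (Rist G (Om r)) m.
Hypothesis hidx : index_le (Dset G P Om H s k) (R_gen G P Om) m.

Definition U := union_conf P Om.
Definition UM (z : Omega) := exists r, Mset P Om s r /\ Om r z.
Definition Rgens : ps := fun f => exists r, In r P /\ Rist G (Om r) f.
Definition Rg := R_gen G P Om.
Definition Dg := Dset G P Om H s k.
Definition Yg := Yset G P Om H s k.
Definition si := inv s.
Definition sat V := forall a, In a P -> (forall z, Om a z -> V z) \/ (forall z, Om a z -> ~ V z).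
Definition tilde y : perm := fun z => s (y (si z)).

Lemma C1 a b : In a P -> In b P -> (forall z, Om a z <-> Om b z) \/ (forall z, ~ (Om a z /\ Om b z)).
Proof. destruct hDC as [_ [X _]]. auto. Qed.
Lemma C3 a b : In a P -> In b P -> (forall z, Om b z -> a z = a z -> a z = z) \/ (forall z, Om b z -> ~ U (a z)).
Proof. destruct hDC as [_ [_ [X _]]]. intros Ha Hb. destruct (X a b Ha Hb); auto. Qed.

Lemma Mss : Mset P Om s s.
Proof.
  destruct hDC as [_ [_ [_ X]]]. split; auto. intros a Ha z Hz Hc.
  destruct (X s hs) as [Y _]. apply (Y z Hz). exists a; auto.
Qed.

Lemma UM_U z : UM z -> U z.
Proof. intros [r [[Hr _] Hz]]. exists r; auto. Qed.

Lemma G1 z : UM z -> ~ U (s z).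
Proof. intros [r [[Hr HM] Hz]] [a [Ha Haz]]. apply (HM a Ha z Hz Haz). Qed.

Lemma G2 z : U z -> ~ UM z -> s z = z.
Proof.
  intros [a [Ha Hz]] HnM. destruct (C3 s a hs Ha) as [X|X].
  - apply (X z Hz); auto.
  - exfalso. apply HnM. exists a. split; auto. split; auto.
    intros a' Ha' z' Hz' Hc. apply (X z' Hz'). exists a'; auto.
Qed.

Lemma si_s z : si (s z) = z.
Proof. apply invK; auto. Qed.
Lemma s_si z : s (si z) = z.
Proof. apply Kinv; auto. Qed.
Lemma bij_si : bijective_perm si.
Proof. apply bij_inv; auto. Qed.

Lemma G3 z : UM z -> ~ U (si z).
Proof.
  intros Hz Hu. destruct (classic (UM (si z))) as [HM|HM].
  - apply (G1 _ HM). rewrite s_si. apply UM_U; auto.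
  - pose proof (G2 _ Hu HM) as E. rewrite s_si in E. rewrite <- E in HM. auto.
Qed.

Lemma G4 z : Om s z -> ~ U (s (s z)).
Proof.
  destruct hDC as [_ [_ [_ X]]]. intros Hz [a [Ha Hc]]. destruct (X s hs) as [_ Y]. apply (Y z Hz a Ha Hc).
Qed.

Lemma Om_UM r z : Mset P Om s r -> Om r z -> UM z.
Proof. intros; exists r; auto. Qed.

Lemma sat_UM : sat UM.
Proof.
  intros a Ha. destruct (classic (exists z, Om a z /\ UM z)) as [[z0 [Hz0 [r [Hr Hrz]]]]|Hno].
  - left. destruct (C1 a r Ha (proj1 Hr)) as [E|E].
    + intros z Hz. exists r. split; auto. apply E; auto.
    + exfalso. apply (E z0); auto.
  - right. intros z Hz HU. apply Hno; eauto.
Qed.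

Lemma sat_Om r : In r P -> sat (Om r).
Proof.
  intros Hr a Ha. destruct (C1 a r Ha Hr) as [E|E].
  - left. intros z Hz. apply E; auto.
  - right. intros z Hz Hr'. apply (E z); auto.
Qed.

Lemma sat_U : sat U.
Proof. intros a Ha. left. intros z Hz. exists a; auto. Qed.

Lemma Rist_bij r f : Rist G (Om r) f -> bijective_perm f.
Proof. intros [Hf _]. apply (sg_bij G); auto. Qed.

Lemma R_sub : is_subgroup Rg.
Proof. apply gen_sub. intros f [r [_ Hf]]. eapply Rist_bij; eauto. Qed.

Lemma Rist_R r f : In r P -> Rist G (Om r) f -> Rg f.
Proof. intros Hr Hf. apply gen_incl. eauto. Qed.

Definition Rprop f := bijective_perm f /\ G f /\ supp_in f U /\ (forall V, sat V -> preserves f V).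

Lemma Rprops f : Rg f -> Rprop f.
Proof.
  intros Hf. apply (gen_ind Rgens Rprop); auto.
  - apply mk_sg.
    + intros g [Hg _]; auto.
    + split. apply bij_id. split. apply sg_id; auto. split. intros z _; auto. intros V _ z. tauto.
    + intros a b [Ba [Ga [Sa Pa]]] [Bb [Gb [Sb Pb]]]. split. apply bij_comp; auto.
      split. apply sg_comp; auto. split. apply supp_comp; auto. intros V HV. apply preserves_comp; auto.
    + intros a [Ba [Ga [Sa Pa]]]. split. apply bij_inv; auto. split. apply sg_inv; auto.
      split. apply supp_inv; auto. intros V HV. apply preserves_inv; auto.
  - intros g [r [Hr [Gg Sg]]]. assert (Bg : bijective_perm g) by (apply (sg_bij G); auto).
    assert (Sg' : supp_in g (Om r)) by (intros z Hz; auto).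
    split; auto. split; auto. split.
    + intros z Hz. apply Sg. intro; apply Hz; exists r; auto.
    + intros V HV z. pose proof (supp_preserves g (Om r) Bg Sg' z) as Pz.
      destruct (HV r Hr) as [X|X].
      * destruct (classic (Om r z)) as [Hz|Hz].
        -- split; intros; apply X; tauto.
        -- rewrite Sg; auto. tauto.
      * destruct (classic (Om r z)) as [Hz|Hz].
        -- split; intro Hc; exfalso. apply (X (g z)); tauto. apply (X z); tauto.
        -- rewrite Sg; auto. tauto.
Qed.

Lemma R_bij f : Rg f -> bijective_perm f.
Proof. intros Hf; apply (proj1 (Rprops f Hf)). Qed.
Lemma R_G f : Rg f -> G f.
Proof. intros Hf; apply (proj1 (proj2 (Rprops f Hf))). Qed.
Lemma R_supp f : Rg f -> supp_in f U.
Proof. intros Hf; apply (proj1 (proj2 (proj2 (Rprops f Hf)))). Qed.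
Lemma R_pres f V : Rg f -> sat V -> preserves f V.
Proof. intros Hf; apply (proj2 (proj2 (proj2 (Rprops f Hf)))). Qed.

Lemma R_restr V f : sat V -> Rg f -> Rg (restr V f).
Proof.
  intros HV Hf.
  assert (HK : is_subgroup (fun f => Rg f /\ Rg (restr V f))).
  { apply mk_sg.
    - intros g [Hg _]. apply R_bij; auto.
    - split. apply sg_id, R_sub. rewrite restr_id. apply sg_id, R_sub.
    - intros a b [Ra Ra'] [Rb Rb']. split. apply sg_comp; auto. apply R_sub.
      rewrite restr_comp. apply sg_comp; auto. apply R_sub. apply R_pres; auto.
    - intros a [Ra Ra']. split. apply sg_inv; auto. apply R_sub.
      rewrite <- restr_inv. apply sg_inv; auto. apply R_sub. apply R_bij; auto. apply R_pres; auto. }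
  apply (gen_ind Rgens _ HK); auto.
  intros g [r [Hr [Gg Sg]]]. split. apply gen_incl; exists r; split; auto; split; auto.
  destruct (HV r Hr) as [X|X].
  - replace (restr V g) with g. apply gen_incl; exists r; split; auto; split; auto.
    symmetry. apply restr_self. intros z Hz. apply Sg. intro; apply Hz; auto.
  - replace (restr V g) with (fun z : Omega => z). apply sg_id, R_sub.
    apply functional_extensionality; intro z. destruct (classic (V z)).
    rewrite restr_in; auto. symmetry; apply Sg. intro; apply (X z); auto.
    rewrite restr_out; auto.
Qed.

Lemma gen_Y_eq f c d : Rg d -> (forall z, f (d z) = c z) -> f = (fun z => c (inv d z)).
Proof.
  intros Rd E. apply functional_extensionality; intro z. rewrite <- E. rewrite Kinv; auto. apply R_bij; auto.
Qed.

Lemma D_sub : is_subgroup Dg.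
Proof.
  apply gen_sub. intros f [c [d [[Rc _] [[Rd _] E]]]].
  rewrite (gen_Y_eq f c d Rd E). apply bij_comp. apply R_bij; auto. apply bij_inv, R_bij; auto.
Qed.

Lemma D_R f : Dg f -> Rg f.
Proof.
  intros Hf. apply (gen_ind (fun f => exists c d, Yg c /\ Yg d /\ forall z, f (d z) = c z) _ R_sub); auto.
  intros g [c [d [[Rc _] [[Rd _] E]]]]. rewrite (gen_Y_eq g c d Rd E).
  apply sg_comp; auto. apply R_sub. apply sg_inv; auto. apply R_sub.
Qed.

Lemma sg_inv_of (K : ps) f g : is_subgroup K -> K f -> inverse_of f g -> K g.
Proof. intros [_ [_ [_ X]]] Hf Hi. eauto. Qed.

Definition Good x y := Rg x /\ Rg y /\ supp_in x UM /\ supp_in y UM /\ H k (fun z => x (s (y (si z)))).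

Lemma tilde_supp y V : supp_in y V -> supp_in (tilde y) (fun z => V (si z)).
Proof. intros Hy z Hz. unfold tilde. rewrite Hy; auto. apply s_si. Qed.

Lemma bij_tilde y : bijective_perm y -> bijective_perm (tilde y).
Proof. intros By. unfold tilde. apply bij_comp; auto. apply bij_comp; auto. apply bij_si. Qed.

Lemma comm_UM_tilde x y : bijective_perm x -> bijective_perm y -> supp_in x UM -> supp_in y UM ->
  forall z, x (tilde y z) = tilde y (x z).
Proof.
  intros Bx By Sx Sy z. apply (commute_disj x (tilde y) UM (fun z => UM (si z))); auto.
  apply bij_tilde; auto. apply tilde_supp; auto.
  intros w H1 H2. apply (G3 w H1). apply UM_U; auto.
Qed.

Lemma inv_tilde y : bijective_perm y -> inv (tilde y) = tilde (inv y).
Proof.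
  intros By. symmetry. apply inv_unique. apply bij_tilde; auto.
  unfold tilde. split; intro z. rewrite si_s, invK, s_si; auto. rewrite si_s, Kinv, s_si; auto.
Qed.

Lemma Good_bij x y : Good x y -> bijective_perm x /\ bijective_perm y.
Proof. intros [Rx [Ry _]]. split; apply R_bij; auto. Qed.

Lemma Good_mul x y x' y' : Good x y -> Good x' y' -> Good (fun z => x (x' z)) (fun z => y (y' z)).
Proof.
  intros Gd Gd'. pose proof (Good_bij _ _ Gd) as [Bx By]. pose proof (Good_bij _ _ Gd') as [Bx' By'].
  destruct Gd as [Rx [Ry [Sx [Sy Hj]]]]. destruct Gd' as [Rx' [Ry' [Sx' [Sy' Hj']]]].
  split. apply sg_comp; auto. apply R_sub. split. apply sg_comp; auto. apply R_sub.
  split. apply supp_comp; auto. split. apply supp_comp; auto.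
  apply (sg_eq _ _ _ (sg_comp _ _ _ hHk Hj Hj')). apply functional_extensionality; intro z.
  pose proof (comm_UM_tilde x' y Bx' By Sx' Sy (s (y' (si z)))) as C. unfold tilde in C.
  rewrite <- C. rewrite si_s. reflexivity.
Qed.

Lemma Good_inv x y : Good x y -> Good (inv x) (inv y).
Proof.
  intros Gd. pose proof (Good_bij _ _ Gd) as [Bx By].
  destruct Gd as [Rx [Ry [Sx [Sy Hj]]]].
  split. apply sg_inv; auto. apply R_sub. split. apply sg_inv; auto. apply R_sub.
  split. apply supp_inv; auto. split. apply supp_inv; auto.
  apply (sg_eq _ _ _ (sg_inv _ _ hHk Hj)).
  change (fun z => x (s (y (si z)))) with (fun z => x (tilde y z)).
  rewrite inv_comp; auto. 2: apply bij_tilde; auto. rewrite inv_tilde; auto.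
  apply functional_extensionality; intro z. symmetry. apply comm_UM_tilde; auto.
  apply bij_inv; auto. apply bij_inv; auto. apply supp_inv; auto. apply supp_inv; auto.
Qed.

Lemma Good_id : Good (fun z => z) (fun z => z).
Proof.
  split. apply sg_id, R_sub. split. apply sg_id, R_sub. split. intros z _; auto. split. intros z _; auto.
  apply (sg_eq _ (fun z => z) _). apply sg_id; auto. apply functional_extensionality; intro z. symmetry; apply s_si.
Qed.

Lemma key_conj c : Rg c -> (fun z => c (s (inv c z))) = (fun z => restr UM c (s (inv (restr UM c) z))).
Proof.
  intros Rc. assert (Bc := R_bij c Rc). assert (Pc := R_pres c UM Rc sat_UM).
  assert (PcU := R_pres c U Rc sat_U). assert (Sc := R_supp c Rc).
  rewrite restr_inv; auto. apply functional_extensionality; intro z.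
  set (w := inv c z). assert (Ez : z = c w) by (unfold w; rewrite Kinv; auto).
  destruct (classic (UM w)) as [Hw|Hw].
  - assert (Hz : UM z) by (rewrite Ez; apply Pc; auto).
    rewrite (restr_in UM (inv c) z Hz). fold w.
    assert (Hsw : ~ U (s w)) by (apply G1; auto).
    rewrite restr_out. rewrite Sc; auto. intro X; apply Hsw; apply UM_U; auto.
  - assert (Hz : ~ UM z) by (rewrite Ez; intro X; apply Hw; apply Pc; auto).
    rewrite (restr_out UM (inv c) z Hz). destruct (classic (U w)) as [Hu|Hu].
    + rewrite (G2 w Hu Hw). rewrite <- Ez.
      assert (U z) by (rewrite Ez; apply PcU; auto).
      rewrite (G2 z); auto. rewrite restr_out; auto.
    + assert (Ewz : z = w) by (rewrite Ez; apply Sc; auto). rewrite <- Ewz.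
      destruct (classic (UM (s z))) as [Hs|Hs].
      * rewrite restr_in; auto.
      * rewrite restr_out; auto. apply Sc. intro Hu'.
        assert (E2 : s (s z) = s z) by (apply G2; auto).
        apply (bij_inj s hsb) in E2. rewrite E2 in Hu'. apply Hu. rewrite <- Ewz. auto.
Qed.

Lemma Y_H c : Yg c -> H k (fun z => c (s (inv c z))).
Proof.
  intros [Rc [h [Hh Hc]]]. apply (sg_eq _ h _ Hh). apply functional_extensionality; intro z.
  rewrite (Hc (inv c z)). rewrite Kinv; auto. apply R_bij; auto.
Qed.

Lemma Y_good a b : Yg a -> Yg b ->
  Good (fun z => restr UM a (inv (restr UM b) z)) (fun z => inv (restr UM a) (restr UM b z)).
Proof.
  intros Ya Yb. assert (Ra : Rg a) by apply Ya. assert (Rb : Rg b) by apply Yb.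
  set (A := restr UM a). set (B := restr UM b).
  assert (RA : Rg A) by (apply R_restr; auto; apply sat_UM).
  assert (RB : Rg B) by (apply R_restr; auto; apply sat_UM).
  assert (BA := R_bij A RA). assert (BB := R_bij B RB).
  assert (SA : supp_in A UM) by apply restr_supp. assert (SB : supp_in B UM) by apply restr_supp.
  split. apply sg_comp. apply R_sub. auto. apply sg_inv; auto. apply R_sub.
  split. apply sg_comp. apply R_sub. apply sg_inv; auto. apply R_sub. auto.
  split. apply supp_comp; auto. apply supp_inv; auto.
  split. apply supp_comp; auto. apply supp_inv; auto.
  assert (HA : H k (fun z => A (s (inv A z)))) by (unfold A; rewrite <- key_conj; auto; apply Y_H; auto).
  assert (HB : H k (fun z => B (s (inv B z)))) by (unfold B; rewrite <- key_conj; auto; apply Y_H; auto).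
  assert (HB' : H k (fun z => B (si (inv B z)))).
  { apply (sg_inv_of _ _ _ hHk HB). split; intro z.
    rewrite invK, si_s, Kinv; auto. rewrite invK, s_si, Kinv; auto. }
  apply (sg_eq _ _ _ (sg_comp _ _ _ hHk HA HB')). apply functional_extensionality; intro z.
  f_equal.
  pose proof (comm_UM_tilde (inv B) (fun w => inv A (B w))) as C. unfold tilde in C.
  symmetry. apply C.
  apply bij_inv; auto. apply bij_comp; auto. apply bij_inv; auto. apply supp_inv; auto. apply supp_comp; auto. apply supp_inv; auto.
Qed.

Definition Sg y := exists x, Good x y.
Definition P1 x := exists y, Good x y.
Definition Dgens : ps := fun f => exists c d, Yg c /\ Yg d /\ forall z, f (d z) = c z.

Lemma S_sub : is_subgroup Sg.
Proof.
  apply mk_sg.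
  - intros y [x Gd]. apply (Good_bij _ _ Gd).
  - exists (fun z => z). apply Good_id.
  - intros a b [x Ga] [x' Gb]. eexists. apply Good_mul; eauto.
  - intros a [x Ga]. eexists. apply Good_inv; eauto.
Qed.

Lemma Rist_sub r : In r P -> is_subgroup (Rist G (Om r)).
Proof.
  intros Hr. apply mk_sg.
  - intros f Hf. eapply Rist_bij; eauto.
  - split. apply sg_id; auto. intros; auto.
  - intros f g [Gf Sf] [Gg Sg']. split. apply sg_comp; auto. intros z Hz. rewrite Sg', Sf; auto.
  - intros f [Gf Sf]. split. apply sg_inv; auto. apply supp_inv. apply (sg_bij G); auto. intros z Hz; auto.
Qed.

Lemma rUM_comp a b : Rg b -> restr UM (fun z => a (b z)) = (fun z => restr UM a (restr UM b z)).
Proof. intros Rb. apply restr_comp. apply R_pres; auto. apply sat_UM. Qed.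

Lemma rUM_inv a : Rg a -> restr UM (inv a) = inv (restr UM a).
Proof. intros Ra. symmetry. apply restr_inv. apply R_bij; auto. apply R_pres; auto. apply sat_UM. Qed.

Lemma R_inv a : Rg a -> Rg (inv a).
Proof. intros; apply sg_inv; auto. apply R_sub. Qed.
Lemma R_comp a b : Rg a -> Rg b -> Rg (fun z => a (b z)).
Proof. intros; apply sg_comp; auto. apply R_sub. Qed.

Lemma Ygen_R f : Dgens f -> Rg f /\ exists c d, Yg c /\ Yg d /\ f = (fun z => c (inv d z)).
Proof.
  intros [c [d [Yc [Yd E]]]]. assert (Rc : Rg c) by apply Yc. assert (Rd : Rg d) by apply Yd.
  rewrite (gen_Y_eq f c d Rd E). split. apply R_comp; auto. apply R_inv; auto. eauto.
Qed.

Lemma D_P1 d : Dg d -> P1 (restr UM d).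
Proof.
  intros Hd.
  assert (HK : is_subgroup (fun d => Rg d /\ P1 (restr UM d))).
  { apply mk_sg.
    - intros f [Rf _]. apply R_bij; auto.
    - split. apply sg_id, R_sub. rewrite restr_id. exists (fun z => z). apply Good_id.
    - intros a b [Ra [y Ga]] [Rb [y' Gb]]. split. apply R_comp; auto. rewrite rUM_comp; auto.
      eexists. apply Good_mul; eauto.
    - intros a [Ra [y Ga]]. split. apply R_inv; auto. rewrite rUM_inv; auto. eexists. apply Good_inv; eauto. }
  apply (gen_ind Dgens _ HK); auto.
  intros f Hf. destruct (Ygen_R f Hf) as [Rf [c [d' [Yc [Yd E]]]]]. split; auto. subst f.
  assert (Rc : Rg c) by apply Yc. assert (Rd : Rg d') by apply Yd.
  rewrite rUM_comp, rUM_inv; auto. 2: apply R_inv; auto.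
  eexists. apply Y_good; auto.
Qed.

Definition cj c0 d : perm := fun z => inv c0 (d (c0 z)).

Lemma cj_comp c0 a b : bijective_perm c0 -> cj c0 (fun z => a (b z)) = (fun z => cj c0 a (cj c0 b z)).
Proof. intros B. apply functional_extensionality; intro z. unfold cj. rewrite Kinv; auto. Qed.

Lemma cj_R c0 a : Rg c0 -> Rg a -> Rg (cj c0 a).
Proof. intros. unfold cj. apply R_comp. apply R_inv; auto. apply R_comp; auto. Qed.

Lemma D_S c0 d : Yg c0 -> Dg d -> Sg (restr UM (cj c0 d)).
Proof.
  intros Y0 Hd. assert (R0 : Rg c0) by apply Y0. assert (B0 := R_bij c0 R0).
  assert (HK : is_subgroup (fun d => Rg d /\ Sg (restr UM (cj c0 d)))).
  { apply mk_sg.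
    - intros f [Rf _]. apply R_bij; auto.
    - split. apply sg_id, R_sub. unfold cj.
      replace (fun z => inv c0 (c0 z)) with (fun z : Omega => z). rewrite restr_id. apply sg_id, S_sub.
      apply functional_extensionality; intro z. rewrite invK; auto.
    - intros a b [Ra Sa] [Rb Sb]. split. apply R_comp; auto. rewrite cj_comp; auto. rewrite rUM_comp; auto.
      apply sg_comp; auto. apply S_sub. apply cj_R; auto.
    - intros a [Ra Sa]. split. apply R_inv; auto.
      replace (cj c0 (inv a)) with (inv (cj c0 a)). rewrite rUM_inv; auto. apply sg_inv; auto. apply S_sub. apply cj_R; auto.
      assert (Ba := R_bij a Ra).
      symmetry; apply inv_unique. apply R_bij, cj_R; auto. unfold cj; split; intro z.
      rewrite (Kinv c0 B0), (invK a Ba), (invK c0 B0); auto.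
      rewrite (Kinv c0 B0), (Kinv a Ba), (invK c0 B0); auto. }
  apply (gen_ind Dgens _ HK); auto.
  intros f Hf. destruct (Ygen_R f Hf) as [Rf [c [d' [Yc [Yd E]]]]]. split; auto. subst f.
  assert (Rc : Rg c) by apply Yc. assert (Rd : Rg d') by apply Yd.
  replace (cj c0 (fun z => c (inv d' z))) with (fun z => (fun w => inv c0 (c w)) (inv (fun w => inv c0 (d' w)) z)).
  2: { apply functional_extensionality; intro z. unfold cj. rewrite (inv_comp (inv c0) d').
       rewrite (inv_inv c0 B0). reflexivity. apply bij_inv; auto. apply R_bij; auto. }
  assert (RX : Rg (fun w => inv c0 (d' w))) by (apply R_comp; [apply R_inv|]; auto).
  rewrite (rUM_comp (fun w => inv c0 (c w)) (inv (fun w => inv c0 (d' w)))). 2: apply R_inv; auto.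
  rewrite (rUM_inv (fun w => inv c0 (d' w))); auto.
  assert (Xg : forall a b, Yg a -> Yg b -> Sg (restr UM (fun w => inv a (b w)))).
  { intros a b Ya Yb. assert (Ra : Rg a) by apply Ya. assert (Rb : Rg b) by apply Yb.
    rewrite rUM_comp, rUM_inv; auto. eexists. apply Y_good; auto. }
  apply sg_comp. apply S_sub. apply Xg; auto. apply sg_inv. apply S_sub. apply Xg; auto.
Qed.

Lemma hidx' : exists gs : list perm, length gs <= m /\ (forall g, In g gs -> Rg g) /\
  forall x, Rg x -> exists g, In g gs /\ exists d, Dg d /\ x = (fun z => g (d z)).
Proof.
  destruct hidx as [gs [L [Hg Hc]]]. exists gs. split; auto. split; auto.
  intros x Rx. destruct (Hc x Rx) as [g [Hin [d [Hd E]]]]. exists g. split; auto. exists d. split; auto.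
  apply functional_extensionality; auto.
Qed.

Lemma Om_sub_UM r : Mset P Om s r -> forall z, Om r z -> UM z.
Proof. intros Hr z Hz. exists r; auto. Qed.

Lemma cover_S c0 r : Yg c0 -> Mset P Om s r -> exists ts, length ts <= m /\ (forall t, In t ts -> Rist G (Om r) t) /\
  forall a, Rist G (Om r) a -> exists t, In t ts /\ exists b, Sg b /\ Rist G (Om r) b /\ a = (fun z => t (b z)).
Proof.
  intros Y0 Hr. assert (R0 : Rg c0) by apply Y0. assert (B0 := R_bij c0 R0). assert (Hr' : In r P) by apply Hr.
  destruct hidx' as [gs [L [Hgs Hc]]].
  destruct (cover_restrict (Rist G (Om r)) Sg (map (fun g => restr UM (cj c0 g)) gs)) as [ts [L2 [Hts Hc2]]].
  apply Rist_sub; auto. apply S_sub.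
  { intros a Ha. assert (Ra : Rg a) by (apply (Rist_R r); auto).
    destruct (Hc (fun z => c0 (a (inv c0 z)))) as [g [Hg [d [Hd E]]]].
    apply R_comp; auto. apply R_comp; auto. apply R_inv; auto.
    exists (restr UM (cj c0 g)). split. apply (in_map (fun g => restr UM (cj c0 g))); auto.
    exists (restr UM (cj c0 d)). split. apply D_S; auto.
    assert (Ea : a = cj c0 (fun z => g (d z))).
    { apply functional_extensionality; intro z. unfold cj. rewrite <- (equal_f E (c0 z)). simpl.
      rewrite invK, invK; auto. }
    rewrite cj_comp in Ea; auto. rewrite <- rUM_comp. 2: apply cj_R; auto; apply D_R; auto.
    rewrite <- Ea. symmetry. apply restr_self. apply (supp_mono _ (Om r)). intros z Hz; apply Ha; auto.
    apply Om_sub_UM; auto. }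
  exists ts. split. rewrite length_map in L2. lia. split; auto.
Qed.

Lemma cover_D r : In r P -> exists ts, length ts <= m /\ (forall t, In t ts -> Rist G (Om r) t) /\
  forall a, Rist G (Om r) a -> exists t, In t ts /\ exists b, Dg b /\ Rist G (Om r) b /\ a = (fun z => t (b z)).
Proof.
  intros Hr. destruct hidx' as [gs [L [Hgs Hc]]].
  destruct (cover_restrict (Rist G (Om r)) Dg gs) as [ts [L2 [Hts Hc2]]].
  apply Rist_sub; auto. apply D_sub.
  { intros a Ha. apply Hc. apply (Rist_R r); auto. }
  exists ts. split. lia. split; auto.
Qed.

Lemma Y_nonempty : exists c0, Yg c0.
Proof.
  apply NNPP. intro Hno.
  assert (Did : forall d, Dg d -> d = (fun z => z)).
  { intros d Hd. apply (gen_ind Dgens (fun f => f = (fun z => z))); auto.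
    - apply mk_sg.
      + intros f ->. apply bij_id.
      + reflexivity.
      + intros f g -> ->. reflexivity.
      + intros f ->. apply inv_id.
    - intros f [c [d' [Yc _]]]. exfalso; eauto. }
  destruct (cover_D s hs) as [ts [L [Hts Hc]]].
  destruct (hNT s hs) as [y [Hy Hny]]. apply Hny.
  apply (fc_centralizer (Rist G (Om s)) (fun b => Dg b /\ Rist G (Om s) b) m ts); auto.
  apply Rist_sub; auto.
  - intros a Ha. destruct (Hc a Ha) as [t [Ht [b [Hb [Hb2 E]]]]]. exists t. split; auto. exists b. auto.
  - intros b [Hb _] z. rewrite (Did b Hb). reflexivity.
Qed.

Lemma comm4 (a1 a2 b1 b2 : perm) : bijective_perm a1 -> bijective_perm a2 -> bijective_perm b1 -> bijective_perm b2 ->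
  (forall z, a2 (b1 z) = b1 (a2 z)) -> (forall z, a2 (b2 z) = b2 (a2 z)) ->
  (forall z, b1 (a1 z) = a1 (b1 z)) -> (forall z, b1 (b2 z) = b2 (b1 z)) ->
  forall z, a1 (a2 (b1 (b2 (inv a2 (inv a1 (inv b2 (inv b1 z))))))) = a1 (b2 (inv a1 (inv b2 z))).
Proof.
  intros B1 B2 B3 B4 H1 H2 H3 H4 z.
  rewrite H1, H2. rewrite (Kinv a2 B2).
  rewrite H4. rewrite (comm_inv b1 a1 B1 H3). rewrite (comm_inv b1 b2 B4 H4). rewrite (Kinv b1 B3). reflexivity.
Qed.

Lemma supp_conj_si f V : supp_in f V -> supp_in (fun z => si (f (s z))) (fun z => V (s z)).
Proof. intros Hf z Hz. rewrite Hf; auto. apply si_s. Qed.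

Section Main.
Variable c0 : perm.
Hypothesis Y0 : Yg c0.
Let C := restr UM c0.
Lemma RC : Rg C. Proof. apply R_restr. apply sat_UM. apply Y0. Qed.
Lemma BC : bijective_perm C. Proof. apply R_bij, RC. Qed.
Lemma SC : supp_in C UM. Proof. apply restr_supp. Qed.
Let g := fun z => C (s (inv C z)).
Let gi := fun z => C (si (inv C z)).
Lemma Hg : H k g.
Proof. unfold g, C. rewrite <- key_conj. apply Y_H; auto. apply Y0. Qed.
Lemma Hgi : H k gi.
Proof.
  apply (sg_inv_of _ _ _ hHk Hg). pose proof BC. unfold g, gi. split; intro z.
  rewrite invK, si_s, Kinv; auto. rewrite invK, s_si, Kinv; auto.
Qed.

Definition Pv x : perm := fun z => si (inv C (x (C (s z)))).
Definition Qf y : perm := fun z => C (y (inv C z)).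

Lemma w_formula x y : Good x y -> forall z, gi (x (s (y (si (g z))))) = Pv x (Qf y z).
Proof.
  intros Gd z. pose proof (Good_bij _ _ Gd) as [Bx By]. destruct Gd as [Rx [Ry [Sx [Sy _]]]].
  pose proof BC as Bc. pose proof SC as Sc.
  unfold gi, g, Pv, Qf.
  pose proof (comm_UM_tilde C y Bc By Sc Sy (s (inv C z))) as E. unfold tilde in E. rewrite si_s in E.
  rewrite <- E. set (v := y (inv C z)).
  assert (SX : supp_in (fun w => inv C (x (C w))) UM).
  { apply supp_comp. apply supp_inv; auto. apply supp_comp; auto. }
  assert (BX : bijective_perm (fun w => inv C (x (C w)))).
  { apply bij_comp. apply bij_inv; auto. apply bij_comp; auto. }
  assert (PX := supp_preserves _ _ BX SX).
  destruct (classic (UM v)) as [Hv|Hv].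
  - assert (HCv : UM (C v)) by (apply (supp_preserves C UM Bc Sc); auto).
    assert (N1 : ~ UM (s v)) by (intro X; apply (G1 v Hv); apply UM_U; auto).
    assert (N2 : ~ UM (s (C v))) by (intro X; apply (G1 _ HCv); apply UM_U; auto).
    rewrite (Sc (s v) N1), (Sx (s v) N1), (supp_inv C UM Bc Sc (s v) N1), si_s.
    rewrite (Sc (s (C v)) N2), (Sx (s (C v)) N2), (supp_inv C UM Bc Sc (s (C v)) N2), si_s. reflexivity.
  - rewrite (Sc v Hv). set (q := inv C (x (C (s v)))). apply Sc. intro Hq.
    assert (Nq : ~ U q) by (pose proof (G1 _ Hq) as X; rewrite s_si in X; auto).
    assert (NqM : ~ UM q) by (intro; apply Nq; apply UM_U; auto).
    assert (NsvM : ~ UM (s v)) by (intro X; apply NqM; apply PX; auto).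
    assert (Eq : q = s v) by (apply SX; auto).
    rewrite Eq, si_s in Hq. auto.
Qed.

Lemma Qf_rist r y : In r P -> Rist G (Om r) y -> Rist G (Om r) (Qf y).
Proof.
  intros Hr [Gy Sy]. pose proof BC as Bc. pose proof RC as Rc.
  assert (PC := R_pres C (Om r) Rc (sat_Om r Hr)).
  split. unfold Qf. apply sg_comp; auto. apply R_G; auto. apply sg_comp; auto. apply sg_inv; auto. apply R_G; auto.
  intros z Hz. unfold Qf. rewrite Sy. apply Kinv; auto. intro X. apply Hz. apply (preserves_inv C _ Bc PC); auto.
Qed.

Lemma exists_y_nontriv r (t : perm) : Mset P Om s r -> Rist G (Om r) t -> ~ is_id t ->
  exists y, Sg y /\ Rist G (Om r) y /\ ~ (forall z, t (y z) = y (t z)).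
Proof.
  intros Hr Ht Hnt. assert (Hr' : In r P) by apply Hr.
  destruct (cover_S c0 r Y0 Hr) as [ts [L [Hts Hc]]].
  apply NNPP. intro Hno. apply Hnt.
  apply (fc_centralizer (Rist G (Om r)) (fun b => Sg b /\ Rist G (Om r) b) m ts); auto.
  apply Rist_sub; auto.
  - intros a Ha. destruct (Hc a Ha) as [t' [Ht' [b [Hb [Hb2 E]]]]]. exists t'. split; auto. exists b. auto.
  - intros b [Hb1 Hb2] z. apply NNPP. intro X. apply Hno. exists b. split; auto.
Qed.

Lemma exists_n0 : exists r, Mset P Om s r /\ exists n0, H k n0 /\ Rist G (Om r) n0 /\ ~ is_id n0.
Proof.
  pose proof BC as Bc. pose proof RC as Rc. pose proof SC as Sc.
  destruct (hNT s hs) as [a0 [Ha0 Hna0]].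
  destruct (exists_y_nontriv s a0 Mss Ha0 Hna0) as [y' [[x' Gd'] [Hy' Hy'c]]].
  assert (Hy'nt : ~ is_id y').
  { intro Hid. apply Hy'c. intro z. rewrite !Hid. reflexivity. }
  pose proof (Good_bij _ _ Gd') as [Bx' By'].
  assert (Gd'c := Gd'). destruct Gd'c as [Rx' [Ry' [Sx' [Sy' Hj']]]].
  destruct (classic (is_id x')) as [Hx'|Hx'].
  - exists s. split. apply Mss.
    exists (fun z => gi (x' (s (y' (si (g z)))))). split.
    { apply (sg_comp _ gi (fun z => x' (s (y' (si (g z)))))); auto. apply Hgi.
      apply (sg_comp _ (fun z => x' (s (y' (si z)))) g); auto. apply Hg. }
    assert (E : (fun z => gi (x' (s (y' (si (g z)))))) = Qf y').
    { apply functional_extensionality; intro z. rewrite (w_formula x' y' Gd'). unfold Pv, Qf.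
      rewrite Hx'. rewrite invK, si_s; auto. }
    rewrite E. split. apply Qf_rist; auto.
    intro Hid. apply Hy'nt. intro z. apply (bij_inj C Bc). pose proof (Hid (C z)) as X.
    unfold Qf in X. rewrite invK in X; auto.
  - apply not_all_ex_not in Hx'. destruct Hx' as [z0 Hz0].
    assert (UMz0 : UM z0) by (apply NNPP; intro X; apply Hz0; apply Sx'; auto).
    destruct UMz0 as [r [Hr Hrz0]]. assert (Hr' : In r P) by apply Hr.
    exists r. split; auto.
    set (X' := fun z => inv C (x' (C z))).
    assert (RX' : Rg X') by (unfold X'; apply R_comp; [apply R_inv|apply R_comp]; auto).
    set (t := restr (Om r) X').
    assert (Rt : Rg t) by (apply R_restr; auto; apply sat_Om; auto).
    assert (At : Rist G (Om r) t) by (split; [apply R_G; auto| apply restr_supp]).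
    assert (PCr := R_pres C (Om r) Rc (sat_Om r Hr')).
    assert (Tnt : ~ is_id t).
    { intro Hid. pose proof (Hid (inv C z0)) as X. unfold t in X. rewrite restr_in in X.
      unfold X' in X. rewrite Kinv in X; auto. apply Hz0. apply (bij_inj (inv C)). apply bij_inv; auto. auto.
      apply (preserves_inv C _ Bc PCr); auto. }
    destruct (exists_y_nontriv r t Hr At Tnt) as [y [[x Gd] [Ay Hyc]]].
    pose proof (Good_bij _ _ Gd) as [Bx By].
    assert (Gdc := Gd). destruct Gdc as [Rx [Ry [Sx [Sy Hj]]]].
    set (j' := fun z => x' (s (y' (si z)))).
    set (w := fun z => gi (x (s (y (si (g z)))))).
    assert (Hw : H k w).
    { apply (sg_comp _ gi (fun z => x (s (y (si (g z)))))); auto. apply Hgi.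
      apply (sg_comp _ (fun z => x (s (y (si z)))) g); auto. apply Hg. }
    assert (Ew : w = (fun z => Pv x (Qf y z))).
    { apply functional_extensionality; intro z. apply w_formula; auto. }
    assert (BPv : bijective_perm (Pv x)).
    { unfold Pv. apply bij_comp. apply bij_si. apply bij_comp. apply bij_inv; auto. apply bij_comp; auto. apply bij_comp; auto. }
    assert (BQ : bijective_perm (Qf y)).
    { unfold Qf. apply bij_comp; auto. apply bij_comp; auto. apply bij_inv; auto. }
    assert (SPv : supp_in (Pv x) (fun z => UM (s z))).
    { unfold Pv. apply (supp_conj_si (fun w => inv C (x (C w))) UM). apply supp_comp. apply supp_inv; auto. apply supp_comp; auto. }
    assert (SQ : supp_in (Qf y) UM).
    { unfold Qf. apply supp_comp; auto. apply supp_comp; auto. apply supp_inv; auto. }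
    assert (Sty' : supp_in (tilde y') (fun z => Om s (si z))).
    { apply tilde_supp. destruct Hy' as [_ X]. intros z Hz; auto. }
    assert (Bty' := bij_tilde y' By').
    assert (HEj' : j' = (fun z => x' (tilde y' z))) by reflexivity.
    assert (Dis1 : forall z, Om s (si z) -> UM (s z) -> False).
    { intros z H1 H2. apply (G4 _ H1). rewrite s_si. apply UM_U; auto. }
    assert (Dis2 : forall z, Om s (si z) -> UM z -> False).
    { intros z H1 H2. apply (G3 z H2). apply UM_U. exists s. split; auto. apply Mss. }
    assert (Dis3 : forall z, UM z -> UM (s z) -> False).
    { intros z H1 H2. apply (G1 z H1). apply UM_U; auto. }
    set (n0 := fun z => j' (w (inv j' (inv w z)))).
    assert (Hn0 : H k n0).
    { unfold n0. apply sg_comp; auto. apply sg_comp; auto. apply sg_comp; auto; apply sg_inv; auto. }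
    assert (En0 : n0 = (fun z => x' (Qf y (inv x' (inv (Qf y) z))))).
    { unfold n0. rewrite Ew, HEj'. rewrite (inv_comp x' (tilde y') Bx' Bty'), (inv_comp (Pv x) (Qf y) BPv BQ).
      apply functional_extensionality; intro z.
      apply comm4; auto.
      - intro v. apply (commute_disj _ _ _ _ Bty' BPv Sty' SPv); auto.
      - intro v. apply (commute_disj _ _ _ _ Bty' BQ Sty' SQ); auto.
      - intro v. apply (commute_disj _ _ _ _ BPv Bx' SPv Sx'). intros u A1 A2; apply (Dis3 u); auto.
      - intro v. apply (commute_disj _ _ _ _ BPv BQ SPv SQ). intros u A1 A2; apply (Dis3 u); auto. }
    assert (AQ : Rist G (Om r) (Qf y)) by (apply Qf_rist; auto).
    assert (BQ' := BQ).
    exists n0. split; auto. rewrite En0. split.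
    + split.
      * apply sg_comp; auto. apply R_G; auto. apply sg_comp. auto. apply AQ. apply sg_comp; auto.
        apply sg_inv; auto. apply R_G; auto. apply sg_inv; auto. apply AQ.
      * intros z Hz. destruct AQ as [_ SQr].
        assert (Px' := R_pres x' (Om r) Rx' (sat_Om r Hr')).
        rewrite (supp_inv _ _ BQ SQr z Hz). rewrite SQr. apply Kinv; auto.
        intro X. apply Hz. apply (preserves_inv x' _ Bx' Px'); auto.
    + intro Hid. apply Hyc. intro z1.
      destruct Ay as [_ Sy2].
      destruct (classic (Om r z1)) as [Hz1|Hz1].
      2: { rewrite (Sy2 z1 Hz1). unfold t. rewrite (restr_out _ _ z1 Hz1). rewrite Sy2; auto. }
      assert (Py := supp_preserves y (Om r) By Sy2).
      assert (Hyz1 : Om r (y z1)) by (apply Py; auto).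
      unfold t. rewrite (restr_in _ _ _ Hyz1), (restr_in _ _ _ Hz1). unfold X'.
      set (u := C z1).
      pose proof (Hid (Qf y (x' u))) as X. cbv beta in X. rewrite invK in X; auto. rewrite invK in X; auto.
      unfold Qf in X. unfold u in X. rewrite invK in X; auto.
      apply (bij_inj C Bc). rewrite Kinv; auto.
Qed.

End Main.

Definition Jel j := exists x y, Good x y /\ j = (fun z => x (s (y (si z)))).
Definition Ok r l := bijective_perm l /\ preserves l (Om r) /\ G (restr (Om r) l).

Lemma Ok_sub r : is_subgroup (Ok r).
Proof.
  apply mk_sg.
  - intros f [B _]; auto.
  - split. apply bij_id. split. intro; tauto. rewrite restr_id. apply sg_id; auto.
  - intros a b [Ba [Pa Ga]] [Bb [Pb Gb]]. split. apply bij_comp; auto. split. apply preserves_comp; auto.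
    rewrite restr_comp; auto. apply sg_comp; auto.
  - intros a [Ba [Pa Ga]]. split. apply bij_inv; auto. split. apply preserves_inv; auto.
    rewrite <- restr_inv; auto. apply sg_inv; auto.
Qed.

Lemma preserves_disj f V W : bijective_perm f -> supp_in f V -> (forall z, V z -> W z -> False) -> preserves f W.
Proof.
  intros Bf Sf Dis z. pose proof (supp_preserves f V Bf Sf z) as PV.
  destruct (classic (V z)) as [Hv|Hv].
  - split; intro X; exfalso. apply (Dis (f z)); auto. apply PV; auto. apply (Dis z); auto.
  - rewrite Sf; auto. tauto.
Qed.

Lemma Jel_restr x y r : Good x y -> Mset P Om s r -> restr (Om r) (fun z => x (s (y (si z)))) = restr (Om r) x.
Proof.
  intros Gd Hr. pose proof (Good_bij _ _ Gd) as [Bx By]. destruct Gd as [_ [_ [_ [Sy _]]]].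
  apply functional_extensionality; intro z. destruct (classic (Om r z)) as [Hz|Hz].
  - rewrite !restr_in; auto. f_equal. rewrite Sy. apply s_si. intro X. apply (G3 z). exists r; auto. apply UM_U; auto.
  - rewrite !restr_out; auto.
Qed.

Lemma Jel_Ok r j : Mset P Om s r -> Jel j -> Ok r j.
Proof.
  intros Hr [x [y [Gd ->]]]. assert (Hr' : In r P) by apply Hr.
  pose proof (Good_bij _ _ Gd) as [Bx By]. assert (Gdc := Gd). destruct Gdc as [Rx [Ry [Sx [Sy _]]]].
  change (fun z => x (s (y (si z)))) with (fun z => x (tilde y z)).
  split. apply bij_comp; auto. apply bij_tilde; auto. split.
  - apply preserves_comp. apply R_pres; auto. apply sat_Om; auto.
    apply (preserves_disj _ _ _ (bij_tilde y By) (tilde_supp y UM Sy)).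
    intros z H1 H2. apply (G3 z). exists r; auto. apply UM_U; auto.
  - change (fun z => x (tilde y z)) with (fun z => x (s (y (si z)))). rewrite Jel_restr; auto.
    apply R_G. apply R_restr; auto. apply sat_Om; auto.
Qed.

Lemma R_Ok r d : In r P -> Rg d -> Ok r d.
Proof.
  intros Hr Rd. split. apply R_bij; auto. split. apply R_pres; auto. apply sat_Om; auto.
  apply R_G. apply R_restr; auto. apply sat_Om; auto.
Qed.

Lemma conj_restr r l f : Ok r l -> supp_in f (Om r) -> bijective_perm f ->
  (fun z => l (f (inv l z))) = (fun z => restr (Om r) l (f (inv (restr (Om r) l) z))).
Proof.
  intros [Bl [Pl Gl]] Sf Bf. rewrite restr_inv; auto. apply functional_extensionality; intro z.
  pose proof (preserves_inv l _ Bl Pl) as Pli. pose proof (supp_preserves f _ Bf Sf) as Pf.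
  destruct (classic (Om r z)) as [Hz|Hz].
  - assert (H1 : Om r (inv l z)) by (apply Pli; auto).
    rewrite (restr_in _ _ _ Hz). rewrite restr_in; auto. apply Pf; auto.
  - assert (H1 : ~ Om r (inv l z)) by (intro X; apply Hz; apply Pli; auto).
    rewrite (restr_out _ _ _ Hz). rewrite (Sf _ H1). rewrite Kinv; auto. rewrite Sf; auto. rewrite restr_out; auto.
Qed.

Lemma conj_rist r l f : In r P -> Ok r l -> Rist G (Om r) f -> Rist G (Om r) (fun z => l (f (inv l z))).
Proof.
  intros Hr Ol Af. assert (Bf : bijective_perm f) by (eapply Rist_bij; eauto).
  assert (Sf : supp_in f (Om r)) by (intros z Hz; apply Af; auto).
  rewrite (conj_restr r l f Ol Sf Bf).
  destruct Ol as [Bl [Pl Gl]].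
  assert (BR : bijective_perm (restr (Om r) l)) by (apply restr_bij; auto).
  assert (SR : supp_in (restr (Om r) l) (Om r)) by apply restr_supp.
  split.
  - apply sg_comp; auto. apply sg_comp; auto. apply Af. apply sg_inv; auto.
  - intros z Hz. rewrite (supp_inv _ _ BR SR z Hz), Sf, SR; auto.
Qed.

Lemma closure_lemma r n0 (X : ps) : Mset P Om s r -> H k n0 -> Rist G (Om r) n0 -> ~ is_id n0 ->
  (forall j, X j -> Jel j) ->
  (forall d, Dg d -> exists l, gen X l /\ restr (Om r) l = restr (Om r) d) ->
  let L := gen (fun f => f = n0 \/ X f) in
  let N := gen (fun f => exists l, L l /\ f = (fun z => l (n0 (inv l z)))) in
  is_subgroup N /\ nontrivial_group N /\ subset N (H k) /\ subset N (Rist G (Om r)) /\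
  normalized_by N Dg /\ is_subgroup L /\ subset L (H k) /\ subset N L.
Proof.
  intros Hr Hn0 An0 NTn0 XJ Real L N. assert (Hr' : In r P) by apply Hr.
  set (Lg := fun f => f = n0 \/ X f).
  set (Ng := fun f => exists l, L l /\ f = (fun z => l (n0 (inv l z)))).
  assert (Bn0 : bijective_perm n0) by (eapply Rist_bij; eauto).
  assert (On0 : Ok r n0).
  { split; auto. split. apply supp_preserves; auto. intros z Hz; apply An0; auto.
    rewrite restr_self. apply An0. intros z Hz; apply An0; auto. }
  assert (LOk : forall l, L l -> Ok r l /\ H k l).
  { intros l Hl. apply (gen_ind Lg _ (sg_inter _ _ (Ok_sub r) hHk)); auto.
    intros f [->|Xf]. split; auto. split. apply Jel_Ok; auto.
    destruct (XJ f Xf) as [x [y [[_ [_ [_ [_ Hj]]]] ->]]]. auto. }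
  assert (L_sub : is_subgroup L).
  { apply gen_sub. intros f [->|Xf]; auto. apply (Jel_Ok r f Hr (XJ f Xf)). }
  assert (NHR : forall f, N f -> H k f /\ Rist G (Om r) f).
  { intros f Hf. apply (gen_ind Ng _ (sg_inter _ _ hHk (Rist_sub r Hr'))); auto.
    intros g [l [Hl ->]]. destruct (LOk l Hl) as [Ol Hkl]. split.
    apply sg_comp; auto. apply sg_comp; auto. apply sg_inv; auto.
    apply conj_rist; auto. }
  assert (N_sub : is_subgroup N).
  { apply gen_sub. intros f [l [Hl ->]]. destruct (LOk l Hl) as [[Bl _] _].
    apply bij_comp; auto. apply bij_comp; auto. apply bij_inv; auto. }
  assert (NL : subset N L).
  { apply (gen_ind Ng); auto. intros f [l [Hl ->]]. apply sg_comp; auto. apply sg_comp; auto.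
    apply gen_incl; auto. apply sg_inv; auto. }
  assert (Lconj : forall l, L l -> forall f, N f -> N (fun z => l (f (inv l z)))).
  { intros l Hl. destruct (LOk l Hl) as [[Bl _] _].
    assert (HK : is_subgroup (fun f => N f /\ N (fun z => l (f (inv l z))))).
    { apply mk_sg.
      - intros f [Nf _]. apply (sg_bij N); auto.
      - split. apply sg_id; auto. apply (sg_eq _ (fun z => z)). apply sg_id; auto.
        apply functional_extensionality; intro z. rewrite Kinv; auto.
      - intros a b [Na Na'] [Nb Nb']. split. apply sg_comp; auto.
        apply (sg_eq _ _ _ (sg_comp _ _ _ N_sub Na' Nb')). apply functional_extensionality; intro z.
        rewrite invK; auto.
      - intros a [Na Na']. split. apply sg_inv; auto.
        assert (Ba : bijective_perm a) by (apply (sg_bij N); auto).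
        apply (sg_inv_of _ _ _ N_sub Na'). split; intro z.
        rewrite (invK l Bl), (invK a Ba), (Kinv l Bl); auto.
        rewrite (invK l Bl), (Kinv a Ba), (Kinv l Bl); auto. }
    intros f Hf. apply (gen_ind Ng _ HK); auto.
    intros g [l' [Hl' ->]]. split. apply gen_incl. eauto.
    destruct (LOk l' Hl') as [[Bl' _] _].
    apply gen_incl. exists (fun z => l (l' z)). split. apply sg_comp; auto.
    rewrite (inv_comp l l' Bl Bl'). reflexivity. }
  split; auto. split; [|split; [|split; [|split; [|split; [|split]]]]]; auto.
  - exists n0. split; auto. apply gen_incl. exists (fun z => z). split. apply sg_id; auto.
    rewrite inv_id. reflexivity.
  - intros f Hf; apply NHR; auto.
  - intros f Hf; apply NHR; auto.
  - intros d x Hd Hx. destruct (Real d Hd) as [l [Hl E]].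
    assert (LL : L l).
    { apply (gen_ind X L L_sub); auto. intros f Xf. apply gen_incl; auto. }
    exists (fun z => l (x (inv l z))). split. apply Lconj; auto.
    destruct (NHR x Hx) as [_ [Gx Sx]].
    assert (Bx : bijective_perm x) by (apply (sg_bij G); auto).
    assert (Sx' : supp_in x (Om r)) by (intros z Hz; auto).
    assert (Bd : bijective_perm d) by (apply R_bij, D_R; auto).
    assert (E1 : (fun z => l (x (inv l z))) = (fun z => d (x (inv d z)))).
    { rewrite (conj_restr r l x (proj1 (LOk l LL)) Sx' Bx). rewrite E.
      rewrite <- (conj_restr r d x); auto. apply R_Ok; auto. apply D_R; auto. }
    intro z. pose proof (equal_f E1 (d z)) as E2. cbv beta in E2. rewrite E2. rewrite (invK d Bd). reflexivity.
  - intros f Hf; apply LOk; auto.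
Qed.

Lemma restr_restr_UM r d : Mset P Om s r -> restr (Om r) (restr UM d) = restr (Om r) d.
Proof.
  intros Hr. apply functional_extensionality; intro z. destruct (classic (Om r z)).
  rewrite !restr_in; auto. exists r; auto. rewrite !restr_out; auto.
Qed.

Lemma D_real r d : Mset P Om s r -> Dg d -> exists j, Jel j /\ restr (Om r) j = restr (Om r) d.
Proof.
  intros Hr Hd. destruct (D_P1 d Hd) as [y Gd].
  exists (fun z => restr UM d (s (y (si z)))). split. exists (restr UM d), y; auto.
  rewrite Jel_restr; auto. apply restr_restr_UM; auto.
Qed.

Lemma main_result : exists r, Mset P Om s r /\
    exists N, is_subgroup N /\ nontrivial_group N /\ subset N (H k) /\
      subset N (Rist G (Om r)) /\ normalized_by N (Dset G P Om H s k) /\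
      ((forall r', Mset P Om s r' -> fin_gen (Rist G (Om r'))) ->
       exists L, is_subgroup L /\ fin_gen L /\ subset L (H k) /\ subset N L).
Proof.
  destruct Y_nonempty as [c0 Y0].
  destruct (exists_n0 c0 Y0) as [r [Hr [n0 [Hn0 [An0 NTn0]]]]].
  assert (Hr' : In r P) by apply Hr.
  exists r. split; auto.
  destruct (classic (forall r', Mset P Om s r' -> fin_gen (Rist G (Om r')))) as [Hfg|Hnfg].
  2: { destruct (closure_lemma r n0 Jel Hr Hn0 An0 NTn0) as [X1 [X2 [X3 [X4 [X5 _]]]]]; auto.
       - intros d Hd. destruct (D_real r d Hr Hd) as [j [Jj Ej]]. exists j. split; auto. apply gen_incl; auto.
       - eexists. split; [exact X1|]. split; [exact X2|]. split; [exact X3|]. split; [exact X4|]. split; [exact X5|].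
         intro; contradiction. }
  set (Kr := fun f => exists d, Dg d /\ f = restr (Om r) d).
  assert (Kr_sub : is_subgroup Kr).
  { apply mk_sg.
    - intros f [d [Hd ->]]. apply restr_bij. apply R_bij, D_R; auto. apply R_pres. apply D_R; auto. apply sat_Om; auto.
    - exists (fun z => z). split. apply sg_id, D_sub. rewrite restr_id; auto.
    - intros a b [d1 [H1 ->]] [d2 [H2 ->]]. exists (fun z => d1 (d2 z)). split. apply sg_comp; auto. apply D_sub.
      symmetry. apply restr_comp. apply R_pres. apply D_R; auto. apply sat_Om; auto.
    - intros a [d1 [H1 ->]]. exists (inv d1). split. apply sg_inv; auto. apply D_sub.
      apply restr_inv. apply R_bij, D_R; auto. apply R_pres. apply D_R; auto. apply sat_Om; auto. }
  assert (KrA : subset Kr (Rist G (Om r))).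
  { intros f [d [Hd ->]]. split. apply R_G, R_restr, D_R; auto. apply sat_Om; auto. apply restr_supp. }
  destruct hidx' as [gs [L0 [Hgs Hc]]].
  destruct (cover_restrict (Rist G (Om r)) Kr (map (restr (Om r)) gs)) as [ts [L2 [Hts Hc2]]].
  apply Rist_sub; auto. auto.
  { intros a Ha. assert (Ra : Rg a) by (apply (Rist_R r); auto).
    destruct (Hc a Ra) as [g [Hg [d [Hd E]]]].
    exists (restr (Om r) g). split. apply (in_map (restr (Om r))); auto.
    exists (restr (Om r) d). split. exists d; auto.
    assert (Pd : preserves d (Om r)) by (apply R_pres; [apply D_R; auto| apply sat_Om; auto]).
    pose proof (restr_comp (Om r) g d Pd) as E'. rewrite <- E'. rewrite <- E. symmetry. apply restr_self. intros z Hz; apply Ha; auto. }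
  destruct (Hfg r Hr) as [gA HgA].
  destruct (schreier (Rist G (Om r)) Kr gA ts) as [ks [Hks HKks]]; auto. apply Rist_sub; auto.
  { intros a Ha. destruct (Hc2 a Ha) as [t [Ht [b [Kb [_ E]]]]]. eauto. }
  destruct (list_collect ks (fun k j => restr (Om r) j = k) Jel) as [Xl [HX1 HX2]].
  { intros kk Hkk. destruct (Hks kk Hkk) as [d [Hd ->]]. destruct (D_real r d Hr Hd) as [j [Jj Ej]]. eauto. }
  assert (GXOk : forall l, gen (fun f => In f Xl) l -> Ok r l).
  { intros l Hl. apply (gen_ind (fun f => In f Xl) _ (Ok_sub r)); auto. intros f Hf. apply Jel_Ok; auto. }
  set (Img := fun f => exists l, gen (fun f => In f Xl) l /\ f = restr (Om r) l).
  assert (Img_sub : is_subgroup Img).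
  { assert (GX_sub : is_subgroup (gen (fun f => In f Xl))).
    { apply gen_sub. intros f Hf. apply (Jel_Ok r f Hr (HX1 f Hf)). }
    apply mk_sg.
    - intros f [l [Hl ->]]. destruct (GXOk l Hl) as [Bl [Pl _]]. apply restr_bij; auto.
    - exists (fun z => z). split. apply (sg_id (gen (fun f => In f Xl)) GX_sub). rewrite restr_id; auto.
    - intros a b [l1 [H1 ->]] [l2 [H2 ->]]. exists (fun z => l1 (l2 z)). split. apply (sg_comp (gen (fun f => In f Xl)) l1 l2 GX_sub H1 H2).
      symmetry. apply restr_comp. apply (GXOk l2 H2).
    - intros a [l1 [H1 ->]]. exists (inv l1). split. apply (sg_inv (gen (fun f => In f Xl)) l1 GX_sub H1).
      destruct (GXOk l1 H1) as [Bl [Pl _]]. apply restr_inv; auto. }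
  destruct (closure_lemma r n0 (fun f => In f Xl) Hr Hn0 An0 NTn0) as [X1 [X2 [X3 [X4 [X5 [X6 [X7 X8]]]]]]]; auto.
  - intros d Hd. assert (Kd : Kr (restr (Om r) d)) by (exists d; auto).
    apply HKks in Kd. apply (gen_ind _ _ Img_sub) in Kd.
    + destruct Kd as [l [Hl E]]. exists l. auto.
    + intros kk Hkk. destruct (HX2 kk Hkk) as [j [Hj Ej]]. exists j. split. apply gen_incl; auto. auto.
  - eexists. split; [exact X1|]. split; [exact X2|]. split; [exact X3|]. split; [exact X4|]. split; [exact X5|].
    intros _. eexists. split; [exact X6|]. split; [|split; [exact X7|exact X8]].
    exists (n0 :: Xl). apply gen_ext. intros f. simpl. split; intros [A|A]; auto.
Qed.

End Setup.

Theorem proposition3p18 (Omega : Type) (n : nat) (H : nat -> pset Omega)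
  (G : pset Omega) (P : list (perm_t Omega)) (Om : perm_t Omega -> Omega -> Prop) :
  1 <= n ->
  (forall i, 1 <= i <= n -> is_subgroup (H i)) ->
  is_subgroup G ->
  confined n H G ->
  confining_subset n H G P ->
  NoDup P ->
  displacement_configuration P Om ->
  (forall s, In s P -> nontrivial_group (Rist G (Om s))) ->
  (forall s, In s P -> FC_trivial (Rist G (Om s)) (n * length P)) ->
  forall s k, In s P -> 1 <= k <= n ->
  index_le (Dset G P Om H s k) (R_gen G P Om) (n * length P) ->
  exists r, Mset P Om s r /\
    exists N, is_subgroup N /\ nontrivial_group N /\ subset N (H k) /\
      subset N (Rist G (Om r)) /\ normalized_by N (Dset G P Om H s k) /\
      ((forall r', Mset P Om s r' -> fin_gen (Rist G (Om r'))) ->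
       exists L, is_subgroup L /\ fin_gen L /\ subset L (H k) /\ subset N L).
Proof.
  intros Hn HH HG Hconf Hcs HND HDC HNT HFC s k Hs Hk Hidx.
  destruct Hcs as [Hnt _].
  assert (Bs : bijective_perm s) by (destruct (Hnt s Hs) as [B _]; exact B).
  apply (main_result Omega H G P Om s k (n * length P)); auto.
Qed.
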